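(* Let $\phi:\mathbb{R}^2\to[-\infty,0]$ be a Borel function. Then $\phi\le\phi_G$ for some $G\in\mathfrak{M}$ if and only if $$(1-t)\phi(y^0)+t\,\phi(y^1)\le t(1-t)\,c(y^0,y^1),\qquad y^0,y^1\in\mathbb{R}^2,\ t\in[0,1].$$ The set of such functions $\phi$ is convex.
   Context: $c(x,y)=(x_1-y_1)(x_2-y_2)$ for $x,y\in\mathbb{R}^2$. $\mathfrak{M}$: family of maximal monotone sets $G\subset\mathbb{R}^2$ (monotone: $c(r,s)\ge0$ for all $r,s\in G$; maximal: not a proper subset of a monotone set). $\phi_G(y)=\inf_{x\in G}c(x,y)$. *)

(* Defs.v *)
(* R : realType, points of R^2 as pairs R * R,
   Borel sigma-algebra on R^2 = product sigma-algebra, values in \bar R. *)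
From HB Require Import structures.
From mathcomp Require Import all_boot all_order all_algebra.
From mathcomp Require Import all_classical all_reals all_analysis.
From mathcomp Require Import measurable_realfun.
Set Implicit Arguments. Unset Strict Implicit. Unset Printing Implicit Defensive.
Import Order.TTheory GRing.Theory Num.Theory.
Local Open Scope classical_set_scope.
Local Open Scope ring_scope.

Definition cost (R : realType) (x y : R * R) : R := (x.1 - y.1) * (x.2 - y.2).

Definition monotone_set (R : realType) (G : set (R * R)) : Prop :=
  forall r s, G r -> G s -> 0 <= cost r s.

Definition maximal_monotone (R : realType) (G : set (R * R)) : Prop :=
  monotone_set G /\
  forall H : set (R * R), monotone_set H -> G `<=` H -> H = G.

Definition phiG (R : realType) (G : set (R * R)) (y : R * R) : \bar R :=
  ereal_inf [set (cost x y)%:E | x in G].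

Definition dominated_by_some_phiG (R : realType) (phi : R * R -> \bar R) : Prop :=
  exists G : set (R * R), maximal_monotone G /\ forall y, (phi y <= phiG G y)%E.

Definition borel_nonpos (R : realType) (phi : R * R -> \bar R) : Prop :=
  measurable_fun [set: R * R] phi /\ forall y, (phi y <= 0)%E.

Definition c_concave_ineq (R : realType) (phi : R * R -> \bar R) : Prop :=
  forall (y0 y1 : R * R) (t : R), 0 <= t <= 1 ->
    ((1 - t)%:E * phi y0 + t%:E * phi y1 <= (t * (1 - t) * cost y0 y1)%:E)%E.

(* Main.v *)
Require Import Defs.
From HB Require Import structures.
From mathcomp Require Import all_boot all_order all_algebra.
From mathcomp Require Import all_classical all_reals all_analysis.
From mathcomp Require Import measurable_realfun.
From mathcomp Require Import ring lra.
Import Order.TTheory GRing.Theory Num.Theory.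
Local Open Scope classical_set_scope.
Local Open Scope ring_scope.

Section Aux.
Variable R : realType.
Implicit Types (a b : R * R) (s u t : R).

Lemma sqrt_lip (h : R) {d P : R} : 0 <= P -> 0 <= d ->
  `| Num.sqrt ((h + d) ^+ 2 + P) - Num.sqrt (h ^+ 2 + P) | <= d.
Proof.
move=> P0 d0.
set A := Num.sqrt _; set B := Num.sqrt _.
have A0 : 0 <= A by exact: sqrtr_ge0.
have B0 : 0 <= B by exact: sqrtr_ge0.
have A2 : A ^+ 2 = (h + d) ^+ 2 + P by rewrite sqr_sqrtr // addr_ge0 // sqr_ge0.
have B2 : B ^+ 2 = h ^+ 2 + P by rewrite sqr_sqrtr // addr_ge0 // sqr_ge0.
have Bh : h <= B by nra.
have Bh' : - h <= B by nra.
have Ah : h + d <= A by nra.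
have Ah' : - (h + d) <= A by nra.
rewrite ler_norml; apply/andP; split; nra.
Qed.

Lemma cost_slice a s u :
  cost (u, s - u) a = ((s - a.1 - a.2) / 2) ^+ 2 - (u - (a.1 - a.2 + s) / 2) ^+ 2.
Proof. by rewrite /cost /=; field. Qed.

Lemma cost_comb (x : R * R) a b t :
  (1 - t) * cost x a + t * cost x b =
  cost x ((1 - t) * a.1 + t * b.1, (1 - t) * a.2 + t * b.2) + t * (1 - t) * cost a b.
Proof. rewrite /cost /=. ring. Qed.

Lemma cost_sym (x y : R * R) : cost x y = cost y x.
Proof. rewrite /cost; ring. Qed.

Lemma gen_max (g : R -> R) : {homo g : x y / x <= y} ->
  {homo (fun s => s - g s) : x y / x <= y} ->
  maximal_monotone (range (fun s => (g s, s - g s))).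
Proof.
move=> g1 g2; split.
  move=> _ _ [s _ <-] [s' _ <-]; rewrite /cost /=.
  have [ss'|s's] := leP s s'.
    have := g1 _ _ ss'; have := g2 _ _ ss'; nra.
  have := g1 _ _ (ltW s's); have := g2 _ _ (ltW s's); nra.
move=> H monH GH; apply/seteqP; split => [z Hz|]; last exact: GH.
have Hg : H (g (z.1 + z.2), (z.1 + z.2) - g (z.1 + z.2)) by apply: GH; exists (z.1 + z.2).
have := monH _ _ Hz Hg; rewrite /cost /= => h.
have e1 : z.1 = g (z.1 + z.2) by nra.
exists (z.1 + z.2) => //; move: e1; case: z {Hz Hg h} => z1 z2 /= e1.
by rewrite -e1; congr pair; ring.
Qed.


Lemma exists_neg (G : set (R * R)) y : maximal_monotone G ->
  exists2 x, G x & cost x y <= 0.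
Proof.
move=> [monG maxG].
have [//|nex] := pselect (exists2 x, G x & cost x y <= 0).
have pos : forall x, G x -> 0 < cost x y.
  move=> x Gx; rewrite ltNge; apply/negP => hx; apply: nex; by exists x.
have monH : monotone_set (G `|` [set y]).
  move=> r s [Gr|->] [Gs|->].
  - exact: monG.
  - exact: ltW (pos _ Gr).
  - by rewrite cost_sym; exact: ltW (pos _ Gs).
  - by rewrite /cost; nra.
have := maxG _ monH (@subsetUl _ G [set y]) => e.
have Gy : G y by rewrite -e; right.
have := pos _ Gy; rewrite /cost; nra.
Qed.

Lemma easy_dir (phi : R * R -> \bar R) :
  dominated_by_some_phiG phi -> c_concave_ineq phi.
Proof.
move=> [G [mG dom]] y0 y1 t /andP[t0 t1].
have [x Gx cx] := exists_neg G ((1 - t) * y0.1 + t * y1.1, (1 - t) * y0.2 + t * y1.2) mG.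
have hy : forall y, (phi y <= (cost x y)%:E)%E.
  move=> y; apply: le_trans (dom y) _; apply: ereal_inf_lbound; by exists x.
apply: le_trans (leeD (lee_wpmul2l _ (hy y0)) (lee_wpmul2l _ (hy y1))) _.
- by rewrite lee_fin subr_ge0.
- by rewrite lee_fin.
rewrite -!EFinM -EFinD lee_fin cost_comb; lra.
Qed.

Section Hard.
Variable phi : R * R -> \bar R.
Hypothesis phi_le0 : forall y, (phi y <= 0)%E.
Hypothesis phi_cc : c_concave_ineq phi.

Definition mm a s := (a.1 - a.2 + s) / 2.
Definition hh a s := (s - a.1 - a.2) / 2.
Definition sq a s := Num.sqrt (hh a s ^+ 2 + - fine (phi a)).
Definition lo a s := mm a s - sq a s.
Definition hi a s := mm a s + sq a s.

Lemma P0 a : 0 <= - fine (phi a).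
Proof. by rewrite oppr_ge0 fine_le0. Qed.

Lemma sq_ge0 a s : 0 <= sq a s. Proof. exact: sqrtr_ge0. Qed.

Lemma sq2 a s : sq a s ^+ 2 = hh a s ^+ 2 + - fine (phi a).
Proof. by rewrite sqr_sqrtr // addr_ge0 ?sqr_ge0 ?P0. Qed.

Lemma in_int a s u : lo a s <= u <= hi a s -> fine (phi a) <= cost (u, s - u) a.
Proof.
move=> /andP[]; rewrite /lo /hi cost_slice => h1 h2.
have := sq2 a s; have := sq_ge0 a s; rewrite /mm /hh in h1 h2 *; nra.
Qed.

Lemma lo_mono a s s' : s <= s' -> lo a s <= lo a s' /\ lo a s' <= lo a s + (s' - s).
Proof.
move=> ss.
have d0 : 0 <= (s' - s) / 2 by apply: divr_ge0; [rewrite subr_ge0|].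
have := sqrt_lip (hh a s) (P0 a) d0.
have -> : hh a s + (s' - s) / 2 = hh a s' by rewrite /hh; field.
rewrite ler_norml -/(sq a s') -/(sq a s) => /andP[h1 h2].
rewrite /lo /mm; split; lra.
Qed.

Lemma fin_phi a : phi a \is a fin_num -> phi a = (fine (phi a))%:E.
Proof. by move=> h; rewrite fineK. Qed.

Lemma pairwise a b s : phi a \is a fin_num -> phi b \is a fin_num -> lo a s <= hi b s.
Proof.
move=> fa fb; rewrite leNgt; apply/negP => hba.
have sa := sq_ge0 a s; have sb := sq_ge0 b s.
pose u0 := (hi b s + lo a s) / 2.
have hmab : 0 < mm a s - mm b s by rewrite /hi /lo in hba; lra.
pose t := (mm a s - u0) / (mm a s - mm b s).
have hu0 : u0 = (1 - t) * mm a s + t * mm b s.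
  by rewrite /t; field; rewrite gt_eqF.
have t0 : 0 < t by rewrite /t divr_gt0 // /u0; rewrite /hi /lo in hba *; lra.
have t1 : t < 1.
  by rewrite /t ltr_pdivrMr // mul1r /u0; rewrite /hi /lo in hba *; lra.
have t01 : 0 <= t <= 1 by apply/andP; split; lra.
have := phi_cc a b t t01.
rewrite (fin_phi a fa) (fin_phi b fb) -!EFinM -EFinD lee_fin => H.
have {H} H : 0 <= (1 - t) * (cost (u0, s - u0) a - fine (phi a)) +
                 t * (cost (u0, s - u0) b - fine (phi b)).
  have -> : (1 - t) * (cost (u0, s - u0) a - fine (phi a)) +
                 t * (cost (u0, s - u0) b - fine (phi b)) =
           ((1 - t) * cost (u0, s - u0) a + t * cost (u0, s - u0) b) -
           ((1 - t) * fine (phi a) + t * fine (phi b)) by ring.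
  rewrite cost_comb cost_slice /=.
  have -> : u0 - (((1 - t) * a.1 + t * b.1) - ((1 - t) * a.2 + t * b.2) + s) / 2 = 0.
    by rewrite hu0 /mm; field.
  rewrite expr0n /= subr0.
  have := sqr_ge0 ((s - ((1 - t) * a.1 + t * b.1) - ((1 - t) * a.2 + t * b.2)) / 2).
  lra.
have ha : cost (u0, s - u0) a - fine (phi a) < 0.
  rewrite cost_slice -/(hh a s) -/(mm a s).
  have := sq2 a s; rewrite /u0 /hi /lo in hba *; nra.
have hb : cost (u0, s - u0) b - fine (phi b) < 0.
  rewrite cost_slice -/(hh b s) -/(mm b s).
  have := sq2 b s; rewrite /u0 /hi /lo in hba *; nra.
nra.
Qed.

Lemma notfin y : phi y \isn't a fin_num -> phi y = -oo%E.
Proof. by move=> /fin_numPn [//|h]; have := phi_le0 y; rewrite h leye_eq. Qed.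

Lemma hard_dir : dominated_by_some_phiG phi.
Proof.
have [[a0 fa0]|nofin] := pselect (exists a, phi a \is a fin_num).
  pose S s := [set lo a s | a in [set a | phi a \is a fin_num]].
  pose L s := sup (S s).
  have Sne : forall s, S s !=set0 by move=> s; exists (lo a0 s), a0.
  have Sub : forall s, has_ubound (S s).
    by move=> s; exists (hi a0 s) => _ [a fa <-]; exact: pairwise.
  have loL : forall a s, phi a \is a fin_num -> lo a s <= L s.
    by move=> a s fa; apply: ub_le_sup => //; exists a.
  have Lhi : forall a s, phi a \is a fin_num -> L s <= hi a s.
    by move=> a s fa; apply: ge_sup => // _ [b fb <-]; exact: pairwise.
  exists (range (fun s => (L s, s - L s))); split.
    apply: gen_max.
      move=> s s' ss; apply: ge_sup => // _ [a fa <-].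
      apply: le_trans (loL a s' fa); exact: (lo_mono a s s' ss).1.
    move=> s s' ss.
    have : L s' <= L s + (s' - s).
      apply: ge_sup => // _ [a fa <-]; apply: le_trans (lo_mono a s s' ss).2 _.
      by rewrite lerD2r; exact: loL.
    lra.
  move=> y; apply: le_ereal_inf_tmp => _ [_ [s _ <-] <-].
  have [fy|nfy] := boolP (phi y \is a fin_num).
    rewrite (fin_phi y fy) lee_fin; apply: in_int.
    by rewrite loL ?Lhi.
  by rewrite (notfin y nfy) leNye.
exists (range (fun s => (s / 2, s - s / 2))); split.
  by apply: gen_max => s s' ss; lra.
move=> y; have nfy : phi y \isn't a fin_num.
  by apply/negP => fy; apply: nofin; exists y.
by rewrite (notfin y nfy) leNye.
Qed.

End Hard.

End Aux.

Theorem lemma9 (R : realType) :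
  (forall phi : R * R -> \bar R, borel_nonpos phi ->
     (dominated_by_some_phiG phi <-> c_concave_ineq phi)) /\
  (forall (phi psi : R * R -> \bar R) (lam : R), 0 <= lam <= 1 ->
     borel_nonpos phi -> dominated_by_some_phiG phi ->
     borel_nonpos psi -> dominated_by_some_phiG psi ->
     let chi := fun y => ((1 - lam)%:E * phi y + lam%:E * psi y)%E in
     borel_nonpos chi /\ dominated_by_some_phiG chi).
Proof.
split.
  move=> phi [_ le0]; split; [exact: easy_dir | exact: hard_dir].
move=> phi psi lam /andP[l0 l1] [mphi phi0] dphi [mpsi psi0] dpsi chi.
have c1 : (0 <= (1 - lam)%:E)%E by rewrite lee_fin subr_ge0.
have c2 : (0 <= lam%:E)%E by rewrite lee_fin.
have n1 : forall y, ((1 - lam)%:E * phi y <= 0)%E.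
  by move=> y; apply: mule_ge0_le0.
have n2 : forall y, (lam%:E * psi y <= 0)%E.
  by move=> y; apply: mule_ge0_le0.
have chi0 : forall y, (chi y <= 0)%E by move=> y; apply: adde_le0.
have bchi : borel_nonpos chi.
  split => //; apply: emeasurable_funD; exact: measurable_funeM.
split => //; apply: (@hard_dir R chi chi0).
move=> y0 y1 t t01; have /andP[t0 t1] := t01.
have d0 : (0 <= (1 - t)%:E)%E by rewrite lee_fin subr_ge0.
have d1 : (0 <= t%:E)%E by rewrite lee_fin.
have m1 : forall x y, (0 <= x)%E -> (x * phi y <= 0)%E.
  by move=> x y x0; apply: mule_ge0_le0.
have m2 : forall x y, (0 <= x)%E -> (x * psi y <= 0)%E.
  by move=> x y x0; apply: mule_ge0_le0.
have Hphi := lee_wpmul2l c1 (@easy_dir R phi dphi y0 y1 t t01).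
have Hpsi := lee_wpmul2l c2 (@easy_dir R psi dpsi y0 y1 t t01).
rewrite le0_muleDr ?m1 // in Hphi.
rewrite le0_muleDr ?m2 // in Hpsi.
rewrite /chi le0_muleDr ?n1 ?n2 // le0_muleDr ?n1 ?n2 //.
rewrite (muleCA (1 - t)%:E) (muleCA (1 - t)%:E) (muleCA t%:E) (muleCA t%:E).
rewrite addeACA.
apply: le_trans (leeD Hphi Hpsi) _.
by rewrite -!EFinM -EFinD lee_fin; rewrite le_eqVlt; apply/orP; left; apply/eqP; ring.
Qed.
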